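(* Let $D\ge2$ be an integer and $\mathbf p=(p_1,\dots,p_D)$ a probability distribution with Shannon entropy $H(\mathbf p)=-\sum_ip_i\log_2p_i$, and for $\mathbf i=(i_1,\dots,i_N)\in\{1,\dots,D\}^N$ put $p_{\mathbf i}=p_{i_1}\cdots p_{i_N}$. Fix $R<\frac{H(\mathbf p)+1}{2}$, and for each $N$ let $S(N)$ be a collection of pairs $(\mathbf i,\mathbf s)$ with $\mathbf i\in\{1,\dots,D\}^N$ and $\mathbf s\in\{+,-\}^{N-1}$ such that $|S(N)|=2^{2NR-1}$. Then for every $\eta>0$ there exists $N_0$ such that for all $N\ge N_0$, \[ \sum_{(\mathbf i,\mathbf s)\in S(N)}p_{\mathbf i}\frac{1}{2^{N-1}}<\eta . \] *)

(* Defs.v *)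
From HB Require Import structures.
From mathcomp Require Import all_boot all_order all_algebra.
From mathcomp Require Import reals exp.
Set Implicit Arguments. Unset Strict Implicit. Unset Printing Implicit Defensive.
Import Order.TTheory GRing.Theory Num.Theory.
Local Open Scope ring_scope.

Definition log2 {R : realType} (x : R) : R := ln x / ln 2.

(* Shannon entropy H(p) = - sum_i p_i log2 p_i  (with 0 log 0 = 0, since ln 0 = 0 in the library) *)
Definition entropy {R : realType} {D : nat} (p : 'I_D -> R) : R :=
  - \sum_(i < D) p i * log2 (p i).

Definition is_prob_dist {R : realType} {D : nat} (p : 'I_D -> R) : Prop :=
  (forall i, 0 <= p i) /\ \sum_(i < D) p i = 1.

Definition pword {R : realType} {D N : nat} (p : 'I_D -> R) (w : {ffun 'I_N -> 'I_D}) : R :=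
  \prod_(k < N) p (w k).

(* pairs (i, s) with i in {1..D}^N and s in {+,-}^(N-1) (true = +) *)
Definition pairT (D N : nat) : finType :=
  ({ffun 'I_N -> 'I_D} * {ffun 'I_N.-1 -> bool})%type.

(* Main.v *)
Require Import Defs.
From HB Require Import structures.
From mathcomp Require Import all_boot all_order all_algebra.
From mathcomp Require Import reals exp sequences.
From mathcomp Require Import ring lra.
Import Order.TTheory GRing.Theory Num.Theory.
Local Open Scope ring_scope.

Lemma expRN_le (R : realType) (y : R) : 0 <= y -> expR (- y) <= 1 - y + y ^+ 2.
Proof.
move=> y0.
have E : (1 + y / 2) ^+ 2 <= expR y.
  have h1 := expR_ge1Dx (y / 2).
  have -> : y = y / 2 + y / 2 by field.
  rewrite expRD expr2; apply: ler_pM => //; lra.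
have hp : 0 < 1 - y + y ^+ 2 by nra.
rewrite expRN -(ler_pM2l (expR_gt0 y)) mulfV ?gt_eqF ?expR_gt0 //.
apply: le_trans (_ : (1 + y / 2) ^+ 2 * (1 - y + y ^+ 2) <= _); last first.
  by rewrite ler_pM2r.
nra.
Qed.

Lemma exp_small (R : realType) (v eps : R) : 0 < v -> 0 < eps ->
  exists N0 : nat, forall N : nat, (N0 <= N)%N -> expR (- (N%:R * v)) < eps.
Proof.
move=> v0 e0.
exists (Num.truncn (1 / (v * eps))).+1 => N hN.
have hN' : 1 / (v * eps) < N%:R.
  apply: lt_le_trans (truncnS_gt _) _; by rewrite ler_nat.
have Np : 0 < N%:R :> R by apply: le_lt_trans hN'; rewrite divr_ge0 // ?mulr_ge0 // ltW.
rewrite expRN.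
have hE : N%:R * v < expR (N%:R * v) by have := expR_ge1Dx (N%:R * v); lra.
rewrite -(ltr_pM2l (expR_gt0 (N%:R * v))) mulfV ?gt_eqF ?expR_gt0 //.
have : 1 < N%:R * v * eps.
  move: hN'; rewrite ltr_pdivrMr ?mulr_gt0 //; nra.
nra.
Qed.
Lemma pt_bound (R : realType) (q y s : R) : 0 <= q -> 0 < s ->
  q <= expR (- y) + q * q `^ s * expR (s * y).
Proof.
move=> q0 s0.
case: (lerP q (expR (- y))) => hq.
  have : 0 <= q * q `^ s * expR (s * y) by rewrite !mulr_ge0 ?powR_ge0 ?expR_ge0.
  lra.
have qp : 0 < q by apply: lt_trans hq; apply: expR_gt0.
rewrite /powR gt_eqF // -mulrA -expRD.
have : 1 <= expR (s * ln q + s * y).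
  rewrite -expR0 ler_expR.
  have : - y < ln q.
    by rewrite -(expRK (- y)) ltr_ln ?posrE ?expR_gt0.
  nra.
have : 0 <= expR (- y) by apply: expR_ge0.
nra.
Qed.

Lemma prod_powR (R : realType) (n : nat) (f : 'I_n -> R) (s : R) :
  (forall k, 0 <= f k) -> (\prod_(k < n) f k) `^ s = \prod_(k < n) (f k) `^ s.
Proof.
move=> f0.
pose P (a b : R) := 0 <= a /\ a `^ s = b.
suff [] : P (\prod_(k < n) f k) (\prod_(k < n) (f k) `^ s) by [].
apply: (big_ind2 P).
- by split => //; rewrite powR1.
- move=> x1 x2 y1 y2 [hx <-] [hy <-]; split; first exact: mulr_ge0.
  by rewrite powRM.
- by move=> i _; split.
Qed.

Lemma renyi_sum (R : realType) (D N : nat) (p : 'I_D -> R) (s : R) :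
  (forall i, 0 <= p i) ->
  \sum_(w : {ffun 'I_N -> 'I_D}) pword p w * (pword p w) `^ s
  = (\sum_(i < D) p i * p i `^ s) ^+ N.
Proof.
move=> p0.
transitivity (\sum_(w : {ffun 'I_N -> 'I_D}) \prod_(k < N) (p (w k) * p (w k) `^ s)).
  apply: eq_bigr => w _; rewrite /pword prod_powR // -big_split //.
rewrite -(bigA_distr_bigA (fun (k : 'I_N) (i : 'I_D) => p i * p i `^ s)) /=.
by rewrite prodr_const card_ord.
Qed.

Lemma pair_sum (R : realType) (D N : nat) (F : {ffun 'I_N -> 'I_D} -> R) :
  \sum_(x : pairT D N) F x.1 = (2 ^ N.-1)%:R * \sum_w F w.
Proof.
rewrite /pairT -(pair_big xpredT xpredT (fun w (b : {ffun 'I_N.-1 -> bool}) => F w)) /=.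
rewrite mulr_sumr; apply: eq_bigr => w _.
by rewrite sumr_const card_ffun card_bool card_ord mulr_natl.
Qed.

Lemma G_bound (R : realType) (D : nat) (p : 'I_D -> R) (s : R) :
  is_prob_dist p -> 0 < s ->
  \sum_(i < D) p i * p i `^ s <=
  1 + s * (\sum_(i < D) p i * ln (p i)) + s ^+ 2 * (\sum_(i < D) p i * ln (p i) ^+ 2).
Proof.
move=> [p0 p1] s0.
have ple1 : forall i, p i <= 1.
  move=> i; rewrite -p1 (bigD1 i) //= lerDl sumr_ge0 //.
rewrite -{1}p1 mulr_sumr mulr_sumr -!big_split /=.
apply: ler_sum => i _.
have [->|pne] := eqVneq (p i) 0; first by rewrite !mul0r !mulr0 !addr0.
have pp : 0 < p i by rewrite lt_def pne p0.
rewrite /powR (negbTE pne).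
have hl : ln (p i) <= 0 by apply: ln_le0.
have hy : 0 <= - (s * ln (p i)).
  rewrite oppr_ge0; apply: mulr_ge0_le0 => //; exact: ltW.
have := @expRN_le R (- (s * ln (p i))) hy.

move=> h.
have e : p i + s * (p i * ln (p i)) + s ^+ 2 * (p i * ln (p i) ^+ 2) =
  p i * (1 - - (s * ln (p i)) + (- (s * ln (p i))) ^+ 2).
  ring.
rewrite e ler_pM2l //; apply: le_trans h; by rewrite opprK.
Qed.

Theorem lemma3 (R : realType) (D : nat) (p : 'I_D -> R) (Rate : R)
  (S : forall N : nat, {set pairT D N}) :
  (2 <= D)%N ->
  is_prob_dist p ->
  Rate < (entropy p + 1) / 2 ->
  (forall N : nat, (#|S N|%:R : R) <= 2 `^ (2 * N%:R * Rate - 1)) ->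
  forall eta : R, 0 < eta ->
  exists N0 : nat, forall N : nat, (N0 <= N)%N ->
    \sum_(x in S N) pword p x.1 * (1 / 2 ^+ N.-1) < eta.
Proof.
move=> _ hp hR hS eta eta0.
have [p0 p1] := hp.
set H := entropy p.
set a : R := ln 2.
have a0 : 0 < a by apply: ln_gt0; lra.
set g := H + 1 - 2 * Rate.
have g0 : 0 < g by rewrite /g; lra.
set L1 := \sum_(i < D) p i * ln (p i).
set K := \sum_(i < D) p i * ln (p i) ^+ 2.
have K0 : 0 <= K by apply: sumr_ge0 => i _; rewrite mulr_ge0 // sqr_ge0.
have HL1 : L1 = - (a * H).
  rewrite /H /entropy /log2 mulrN opprK mulr_sumr /L1; apply: eq_bigr => i _.
  rewrite -/a; field; exact: lt0r_neq0.
set s := a * g / (4 * (K + 1)).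
have s0 : 0 < s by rewrite /s divr_gt0 // ?mulr_gt0 //; lra.
have sK : s * (K + 1) = a * g / 4.
  rewrite /s; field; apply/eqP; lra.
set G := \sum_(i < D) p i * p i `^ s.
have G0 : 0 <= G by apply: sumr_ge0 => i _; rewrite mulr_ge0 ?powR_ge0.
have GE : G <= expR (- (s * (a * H - a * g / 4))).
  apply: le_trans (G_bound _ _ _ _ hp s0) _.
  rewrite -/L1 -/K HL1.
  apply: le_trans _ (expR_ge1Dx _).
  have : s * K <= a * g / 4 by rewrite -sK; nra.
  nra.
have main : forall N : nat, (1 <= N)%N ->
    \sum_(x in S N) pword p x.1 * (1 / 2 ^+ N.-1) <=
    expR (- (N%:R * (a * g / 2))) + expR (s * a) * expR (- (N%:R * (s * a * g / 4))).
  move=> N N1.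
  have hN1 : (N.-1)%:R = N%:R - 1 :> R.
    by case: N N1 => // n _; rewrite /= -natr1 addrK.
  set c : R := 1 / 2 ^+ N.-1.
  have c0 : 0 < c by rewrite /c divr_gt0 // exprn_gt0.
  have lnc : ln c = - ((N.-1)%:R * a).
    rewrite /c div1r lnV ?posrE ?exprn_gt0 // lnXn // -/a mulr_natl //.
  set y := a * N%:R * (2 * Rate + g / 2).
  set T := fun x : pairT D N => pword p x.1 * c * (pword p x.1 * c) `^ s * expR (s * y).
  have pw0 : forall w : {ffun 'I_N -> 'I_D}, 0 <= pword p w.
    by move=> w; apply: prodr_ge0 => k _.
  have step1 : \sum_(x in S N) pword p x.1 * c <= #|S N|%:R * expR (- y) + \sum_x T x.
    apply: le_trans (_ : \sum_(x in S N) (expR (- y) + T x) <= _).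
      apply: ler_sum => x _; apply: pt_bound => //; exact: mulr_ge0 (pw0 _) (ltW c0).
    rewrite big_split /=; apply: lerD.
      by rewrite sumr_const mulr_natl.
    rewrite [X in X <= _]big_mkcond /=; apply: ler_sum => x _.
    case: (x \in S N) => //=; rewrite /T.
    apply: mulr_ge0; last exact: expR_ge0.
    apply: mulr_ge0; last exact: powR_ge0.
    exact: mulr_ge0 (pw0 _) (ltW c0).
  have step2 : \sum_x T x = expR (s * y) * expR (s * ln c) * G ^+ N.
    rewrite /T (pair_sum _ _ _ (fun w => pword p w * c * (pword p w * c) `^ s * expR (s * y))).
    have e : forall w : {ffun 'I_N -> 'I_D},
      pword p w * c * (pword p w * c) `^ s * expR (s * y) =
      (c * c `^ s * expR (s * y)) * (pword p w * pword p w `^ s).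
      move=> w; rewrite powRM ?(ltW c0) //; ring.
    under eq_bigr do rewrite e.
    rewrite -mulr_sumr renyi_sum // -/G.
    have -> : c `^ s = expR (s * ln c) by rewrite /powR gt_eqF.
    rewrite natrX /c; field.
    by rewrite expf_neq0 // pnatr_eq0.
  have hSN : #|S N|%:R <= expR ((2 * N%:R * Rate - 1) * a).
    by apply: le_trans (hS N) _; rewrite /powR pnatr_eq0 /= -/a.
  have GN : G ^+ N <= expR (N%:R * (- (s * (a * H - a * g / 4)))).
    by rewrite expRM_natl; apply: lerXn2r; rewrite ?nnegrE ?expR_ge0.
  rewrite -/c; apply: le_trans step1 _; rewrite step2.
  apply: lerD.
    apply: le_trans (_ : expR ((2 * N%:R * Rate - 1) * a) * expR (- y) <= _).
      by rewrite ler_pM2r ?expR_gt0.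
    rewrite -expRD ler_expR /y /g.
    have : 0 <= a by exact: ltW.
    nra.
  apply: le_trans (_ : expR (s * y) * expR (s * ln c) *
       expR (N%:R * (- (s * (a * H - a * g / 4)))) <= _).
    by rewrite ler_pM2l ?mulr_gt0 ?expR_gt0.
  rewrite -!expRD le_eqVlt; apply/orP; left; apply/eqP; congr expR.
  by rewrite lnc hN1 /y /g; field.
have v1 : 0 < a * g / 2 by rewrite divr_gt0 // mulr_gt0.
have v2 : 0 < s * a * g / 4.
  by apply: divr_gt0 => //; apply: mulr_gt0 => //; apply: mulr_gt0.
have e1 : 0 < eta / 2 by rewrite divr_gt0 //.
have eS := expR_gt0 (s * a).
have e2 : 0 < eta / (2 * expR (s * a)) by rewrite divr_gt0 // mulr_gt0.
have [M1 HM1] := exp_small _ _ _ v1 e1.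
have [M2 HM2] := exp_small _ _ _ v2 e2.
exists (maxn 1 (maxn M1 M2)); move=> N; rewrite !geq_max => /and3P [h1 h2 h3].
apply: (le_lt_trans (main N h1)).
have := HM1 N h2; have := HM2 N h3.
set X := expR (- (N%:R * (s * a * g / 4))).
set Y := expR (- (N%:R * (a * g / 2))).
rewrite ltr_pdivlMr ?mulr_gt0 // => hX hY.
have : eta / 2 * 2 = eta by field.
nra.
Qed.
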